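(* Consider the following optimisation problem. There are $J$ portfolios; portfolio $j$ has a set $\mathcal{I}_j$ of independent accounts with standard deviations $\sigma_i>0$ and a dependent block $\mathcal{D}_j$ of $|\mathcal{D}_j|$ accounts whose total has standard deviation $\sigma_{\mathcal{D},j}\ge0$ ($\sigma_{\mathcal{D},j}\sqrt{|\mathcal{D}_j|}=0$ if $\mathcal{D}_j=\emptyset$, in which case terms involving $r_j$ are absent). Given a budget $C>0$ and bounds $V_j>0$, minimise over positive reals $r_j$, $R_i$ ($i\in\mathcal{I}=\cup_j\mathcal{I}_j$) the objective $\sum_{j}\big(\sigma^2_{\mathcal{D},j}/r_j+\sum_{i\in\mathcal{I}_j}\sigma_i^2/R_i\big)$ subject to $\sum_jr_j|\mathcal{D}_j|+\sum_{i\in\mathcal{I}}R_i=C$ and $\operatorname{Var}(\hat\mu_j):=\sigma^2_{\mathcal{D},j}/r_j+\sum_{i\in\mathcal{I}_j}\sigma_i^2/R_i\le V_j$ for $j=1,\dots,J$. Let $\gamma_j=\sigma_{\mathcal{D},j}\sqrt{|\mathcal{D}_j|}+\sum_{i\in\mathcal{I}_j}\sigma_i$, $\epsilon_j=\gamma_j/V_j$, and for $\mathcal{B}\subseteq\{1,\dots,J\}$ let $\alpha(\mathcal{B})=\big(C-\sum_{j\in\mathcal{B}}\gamma_j\epsilon_j\big)/\sum_{j\notin\mathcal{B}}\gamma_j$, $e_j(\mathcal{B})=\epsilon_j$ for $j\in\mathcal{B}$ and $e_j(\mathcal{B})=\alpha(\mathcal{B})$ for $j\notin\mathcal{B}$,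 and let $\mathbf{R}^\ast(\mathcal{B})$ be the allocation $R_i=\sigma_ie_j(\mathcal{B})$ ($i\in\mathcal{I}_j$), $r_j=\frac{\sigma_{\mathcal{D},j}}{\sqrt{|\mathcal{D}_j|}}e_j(\mathcal{B})$. Algorithm 1: initialise $\mathcal{B}=\emptyset$; repeat: compute $\mathbf{R}^\ast(\mathcal{B})$, then for $j=1,\dots,J$, if $\operatorname{Var}(\hat\mu_j)>V_j$ under this allocation, add $j$ to $\mathcal{B}$; until a complete pass adds nothing to $\mathcal{B}$; return $\mathcal{B}$ and $\mathbf{R}^\ast(\mathcal{B})$. If Slater's condition $\sum_{j=1}^J\gamma_j\epsilon_j<C$ holds, then Algorithm 1 terminates and the returned allocation $\mathbf{R}^\ast(\mathcal{B})$ is a global minimiser of the optimisation problem.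
   Context: Slater's condition here is equivalent to the existence of a point satisfying the budget equality and all variance constraints strictly. $\mathbf{R}^\ast(\mathcal{B})$ is the solution of the stationarity (KKT) equations of the Lagrangian when the constraints indexed by $\mathcal{B}$ are active and the remaining ones have zero Lagrange multiplier. The $\sigma_i$, $\sigma_{\mathcal{D},j}$ are the true (known) variances. *)

(* Defs.v *)
From HB Require Import structures.
From mathcomp Require Import all_boot all_order all_algebra.
Set Implicit Arguments. Unset Strict Implicit. Unset Printing Implicit Defensive.
Import Order.TTheory GRing.Theory Num.Theory.
Local Open Scope ring_scope.

(* Problem data:
   - J portfolios, indexed by 'I_J;
   - A : finite type of independent accounts (the set I = U_j I_j), each
     account a belongs to portfolio  port a  (so I_j = {a | port a = j});
   - sig a  : standard deviation sigma_i of independent account a;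
   - d j    : |D_j|, the size of the dependent block of portfolio j;
   - sD j   : sigma_{D,j}, std. dev. of the total of the dependent block;
   - C      : budget;  V j : variance bound of portfolio j.
   An allocation is a pair (r, Rv) with r : 'I_J -> R (the r_j) and
   Rv : A -> R (the R_i).  When d j = 0 the variable r j is absent: it
   contributes neither to the budget (factor |D_j| = 0) nor to the
   objective. *)
Section Portfolio.
Variables (R : rcfType) (J : nat) (A : finType) (port : A -> 'I_J)
  (sig : A -> R) (d : 'I_J -> nat) (sD : 'I_J -> R) (C : R) (V : 'I_J -> R).

Definition gamma (j : 'I_J) : R :=
  sD j * Num.sqrt (d j)%:R + \sum_(a | port a == j) sig a.

Definition eps (j : 'I_J) : R := gamma j / V j.

Definition alpha (B : {set 'I_J}) : R :=
  (C - \sum_(j in B) gamma j * eps j) / \sum_(j | j \notin B) gamma j.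

Definition e (B : {set 'I_J}) (j : 'I_J) : R :=
  if j \in B then eps j else alpha B.

Definition rstar (B : {set 'I_J}) (j : 'I_J) : R :=
  sD j / Num.sqrt (d j)%:R * e B j.
Definition Rstar (B : {set 'I_J}) (a : A) : R := sig a * e B (port a).

Definition var (r : 'I_J -> R) (Rv : A -> R) (j : 'I_J) : R :=
  (if d j == 0%N then 0 else sD j ^+ 2 / r j)
  + \sum_(a | port a == j) sig a ^+ 2 / Rv a.

Definition objective (r : 'I_J -> R) (Rv : A -> R) : R := \sum_j var r Rv j.

(* Feasible set.  R_i > 0; r_j > 0 whenever it carries variance
   (sD j > 0); when sD j = 0 the closure value r_j = 0 is admitted. *)
Definition feasible (r : 'I_J -> R) (Rv : A -> R) : Prop :=
  [/\ forall a, 0 < Rv a,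
      forall j, (0 < d j)%N -> 0 <= r j /\ (0 < sD j -> 0 < r j),
      \sum_j r j * (d j)%:R + \sum_a Rv a = C
    & forall j, var r Rv j <= V j].

Definition global_minimiser (r : 'I_J -> R) (Rv : A -> R) : Prop :=
  feasible r Rv /\
  forall r' Rv', feasible r' Rv' -> objective r Rv <= objective r' Rv'.

Definition alg_step (B : {set 'I_J}) : {set 'I_J} :=
  B :|: [set j | V j < var (rstar B) (Rstar B) j].

Definition alg_iter (n : nat) : {set 'I_J} := iter n alg_step set0.

Definition terminates_at (n : nat) : Prop :=
  (forall k, (k < n)%N -> alg_step (alg_iter k) != alg_iter k)
  /\ alg_step (alg_iter n) = alg_iter n.

End Portfolio.

(* Main.v *)
Require Import Defs.
From HB Require Import structures.
From mathcomp Require Import all_boot all_order all_algebra ring lra.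
Set Implicit Arguments. Unset Strict Implicit. Unset Printing Implicit Defensive.
Import Order.TTheory GRing.Theory Num.Theory.
Local Open Scope ring_scope.

Section Proof.
Variables (R : rcfType) (J : nat) (A : finType) (port : A -> 'I_J)
  (sig : A -> R) (d : 'I_J -> nat) (sD : 'I_J -> R) (C : R) (V : 'I_J -> R).
Hypotheses (sig_gt0 : forall a, 0 < sig a) (sD_ge0 : forall j, 0 <= sD j)
  (C_gt0 : 0 < C) (V_gt0 : forall j, 0 < V j)
  (G_gt0 : 0 < \sum_j gamma port sig d sD j)
  (slater : \sum_j gamma port sig d sD j * eps port sig d sD V j < C).

Local Notation gam := (gamma port sig d sD).
Local Notation ep := (eps port sig d sD V).
Local Notation al := (alpha port sig d sD C V).
Local Notation ee := (e port sig d sD C V).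
Local Notation vr := (var port sig d sD).
Local Notation rs := (rstar port sig d sD C V).
Local Notation Rs := (Rstar port sig d sD C V).

Lemma gam_ge0 j : 0 <= gam j.
Proof.
rewrite /gamma addr_ge0 //; first by rewrite mulr_ge0 // sqrtr_ge0.
by rewrite sumr_ge0 // => a _; apply: ltW.
Qed.

Lemma ep_ge0 j : 0 <= ep j.
Proof. by rewrite /eps divr_ge0 ?gam_ge0 // ltW. Qed.

Lemma N_gt0 (B : {set 'I_J}) : 0 < C - \sum_(j in B) gam j * ep j.
Proof.
rewrite subr_gt0; apply: le_lt_trans slater.
rewrite [X in _ <= X](bigID (fun j => j \in B)) /= lerDl.
by rewrite sumr_ge0 // => j _; rewrite mulr_ge0 ?gam_ge0 ?ep_ge0.
Qed.

Definition h (B : {set 'I_J}) (x : R) j := if j \in B then gam j * ep j else x * gam j.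

Lemma sum_h (B : {set 'I_J}) x :
  \sum_j h B x j = \sum_(j in B) gam j * ep j + x * \sum_(j | j \notin B) gam j.
Proof.
rewrite (bigID (fun j => j \in B)) /= mulr_sumr; congr (_ + _); apply: eq_bigr => j.
  by rewrite /h => ->.
by rewrite /h => /negbTE ->.
Qed.

Lemma sum_h_alpha (B : {set 'I_J}) : 0 < \sum_(j | j \notin B) gam j ->
  \sum_j h B (al B) j = C.
Proof.
move=> D0; rewrite sum_h /alpha -mulrA mulVf ?gt_eqF // mulr1.
by rewrite addrC subrK.
Qed.

Lemma var_star (B : {set 'I_J}) j : vr (rs B) (Rs B) j = gam j / ee B j.
Proof.
rewrite /var /gamma /rstar /Rstar.
have -> : \sum_(a | port a == j) sig a ^+ 2 / (sig a * ee B (port a)) =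
          (\sum_(a | port a == j) sig a) / ee B j.
  rewrite mulr_suml; apply: eq_bigr => a /eqP ->.
  have := sig_gt0 a; move: (sig a) => s s0.
  rewrite invfM expr2 !mulrA mulfK ?gt_eqF //.
rewrite mulrDl; congr (_ + _).
case: eqP => [->|/eqP dn0]; first by rewrite sqrtr0 !mulr0 mul0r.
have sq0 : Num.sqrt (d j)%:R != 0 :> R.
  by rewrite sqrtr_eq0 -ltNge ltr0n lt0n.
have sqd : Num.sqrt (d j)%:R ^+ 2 = (d j)%:R :> R by rewrite sqr_sqrtr // ler0n.
have [->|sn0] := eqVneq (sD j) 0; first by rewrite !mul0r expr0n /= mul0r.
rewrite !invfM invrK expr2.
by rewrite !mulrA mulfK.
Qed.

Definition Inv (B : {set 'I_J}) :=
  (forall j, j \in B -> 0 < gam j /\ al B <= ep j) /\ 0 < \sum_(j | j \notin B) gam j.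

Lemma alpha_gt0 (B : {set 'I_J}) : 0 < \sum_(j | j \notin B) gam j -> 0 < al B.
Proof. by move=> D0; rewrite /alpha divr_gt0 ?N_gt0. Qed.

Lemma step_new (B : {set 'I_J}) j : j \notin B ->
  (j \in alg_step port sig d sD C V B) = (V j < gam j / al B).
Proof.
move=> jB; rewrite /alg_step in_setU (negbTE jB) /= inE var_star /e (negbTE jB).
by [].
Qed.

Lemma step_old (B : {set 'I_J}) j : j \in B -> j \in alg_step port sig d sD C V B.
Proof. by move=> jB; rewrite /alg_step in_setU jB. Qed.

Lemma Inv_step (B : {set 'I_J}) : Inv B -> Inv (alg_step port sig d sD C V B).
Proof.
move=> [IB D0]; set B' := alg_step _ _ _ _ _ _ B.
have a0 := alpha_gt0 D0.
have newP j : j \notin B -> j \in B' -> 0 < gam j /\ al B < ep j.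
  move=> jB; rewrite step_new // ltr_pdivlMr // => H.
  have g0 : 0 < gam j by apply: lt_trans H; rewrite mulr_gt0.
  by split=> //; rewrite /eps ltr_pdivlMr // mulrC.
have hle : C <= \sum_j h B' (al B) j.
  rewrite -{1}(sum_h_alpha D0); apply: ler_sum => j _; rewrite /h.
  case: (boolP (j \in B)) => jB; first by rewrite step_old.
  case: (boolP (j \in B')) => jB' //.
  have [g0 /ltW aep] := newP j jB jB'.
  by rewrite mulrC ler_wpM2l // ltW.
rewrite sum_h in hle.
have N0 := N_gt0 B'.
have D'0 : 0 < \sum_(j | j \notin B') gam j.
  have : 0 < al B * \sum_(j | j \notin B') gam j.
    by apply: lt_le_trans N0 _; rewrite lerBlDl.
  by rewrite pmulr_rgt0.
have a'le : al B' <= al B.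
  by rewrite /alpha ler_pdivrMr // lerBlDl.
split=> // j jB'.
case: (boolP (j \in B)) => jB.
  have [g0 aep] := IB j jB; split=> //; exact: le_trans aep.
have [g0 aep] := newP j jB jB'; split=> //; apply: le_trans a'le (ltW aep).
Qed.

Lemma Inv0 : Inv set0.
Proof.
split=> [j|]; first by rewrite in_set0.
by under eq_bigl do rewrite in_set0.
Qed.

Lemma Inv_iter n : Inv (alg_iter port sig d sD C V n).
Proof. elim: n => [|n IH]; [exact: Inv0 | exact: Inv_step]. Qed.


Lemma term_ineq (c x k t : R) : 0 <= c -> 0 <= x -> (0 < c -> 0 < x) ->
  c * t * k + c * t * k - x * k ^+ 2 <= t ^+ 2 * (c ^+ 2 / x).
Proof.
move=> c0 x0 cx.
have [x00|xn0] := eqVneq x 0.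
  have -> : c = 0 by apply/eqP; rewrite eq_le c0 andbT leNgt; apply/negP => /cx; rewrite x00 ltxx.
  rewrite x00.
  by rewrite !(mul0r, mulr0, subr0, addr0, invr0, expr0n) /= ?mulr0 ?mul0r ?subr0 ?lexx.
have xp : 0 < x by rewrite lt_def xn0 x0.
rewrite mulrA ler_pdivlMr //.
have : 0 <= (c * t - x * k) ^+ 2 by rewrite sqr_ge0.
nra.
Qed.

Lemma sum_port (F : A -> R) : \sum_a F a = \sum_j \sum_(a | port a == j) F a.
Proof. by rewrite (partition_big port xpredT). Qed.

Definition bud (r : 'I_J -> R) (Rv : A -> R) j := r j * (d j)%:R + \sum_(a | port a == j) Rv a.

Lemma sum_bud (r : 'I_J -> R) (Rv : A -> R) : \sum_j r j * (d j)%:R + \sum_a Rv a = \sum_j bud r Rv j.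
Proof. by rewrite sum_port -big_split. Qed.

Lemma key_j (B : {set 'I_J}) (r : 'I_J -> R) (Rv : A -> R) j : (forall a, 0 < Rv a) ->
  ((0 < d j)%N -> 0 <= r j /\ (0 < sD j -> 0 < r j)) ->
  gam j * ee B j + gam j * ee B j - bud r Rv j <= ee B j ^+ 2 * vr r Rv j.
Proof.
move=> Rv0 rc.
rewrite /gamma /bud /var mulrDr mulrDl.
set E := ee B j.
have H2 : \sum_(a | port a == j) sig a * E + \sum_(a | port a == j) sig a * E
   - \sum_(a | port a == j) Rv a <= E ^+ 2 * \sum_(a | port a == j) sig a ^+ 2 / Rv a.
  rewrite -big_split -sumrB mulr_sumr; apply: ler_sum => a _.
  have := @term_ineq (sig a) (Rv a) 1 E (ltW (sig_gt0 a)) (ltW (Rv0 a)) (fun _ => Rv0 a).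
  by rewrite !mulr1 expr1n mulr1.
have H1 : sD j * Num.sqrt (d j)%:R * E + sD j * Num.sqrt (d j)%:R * E - r j * (d j)%:R
   <= E ^+ 2 * (if d j == 0%N then 0 else sD j ^+ 2 / r j).
  case: eqP => [->|/eqP dn0]; first by rewrite sqrtr0 !(mulr0, mul0r, subr0, addr0) lexx.
  have dp : (0 < d j)%N by rewrite lt0n.
  have [r0 rp] := rc dp.
  have := @term_ineq (sD j) (r j) (Num.sqrt (d j)%:R) E (sD_ge0 j) r0 rp.
  by rewrite sqr_sqrtr ?ler0n // => H; apply: le_trans H; rewrite le_eqVlt; apply/orP; left; apply/eqP; ring.
rewrite mulr_suml.
have -> : forall (a b c p : R), a + b + (a + b) - (c + p) = (a + a - c) + (b + b - p) by move=> *; ring.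
exact: lerD H1 H2.
Qed.

Lemma opt (B : {set 'I_J}) : Inv B -> alg_step port sig d sD C V B = B ->
  global_minimiser port sig d sD C V (rs B) (Rs B).
Proof.
move=> [IB D0] fixB.
have a0 := alpha_gt0 D0.
set a := al B in a0 *.
have ege j : a <= ee B j.
  by rewrite /e; case: ifP => [/IB []|]; rewrite ?lexx.
have e0 j : 0 < ee B j by apply: lt_le_trans (ege j).
have fixj j : j \notin B -> gam j / a <= V j.
  move=> jB; rewrite leNgt; apply/negP => H.
  by have := jB; rewrite -{1}fixB step_new // -/a H.
have vstar j : vr (rs B) (Rs B) j <= V j.
  rewrite var_star /e; case: ifP => jB; last by apply: fixj; rewrite jB.
  have [g0 _] := IB j jB.
  by rewrite /eps invf_div mulrC divfK ?gt_eqF.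
have bstar j : bud (rs B) (Rs B) j = h B a j.
  rewrite /bud /h /rstar /Rstar.
  have -> : \sum_(a0 | port a0 == j) sig a0 * ee B (port a0) =
            (\sum_(a0 | port a0 == j) sig a0) * ee B j.
    by rewrite mulr_suml; apply: eq_bigr => a1 /eqP ->.
  have -> : sD j / Num.sqrt (d j)%:R * ee B j * (d j)%:R =
            sD j * Num.sqrt (d j)%:R * ee B j.
    have [->|dn0] := eqVneq (d j) 0%N; first by rewrite sqrtr0 !(mulr0, invr0, mul0r).
    have sq0 : Num.sqrt (d j)%:R != 0 :> R by rewrite sqrtr_eq0 -ltNge ltr0n lt0n.
    rewrite -{2}(@sqr_sqrtr _ (d j)%:R) ?ler0n // expr2.
    by field.
  rewrite -mulrDl -/(gamma port sig d sD j) /e.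
  by case: ifP => _ //; rewrite mulrC.
have feas : feasible port sig d sD C V (rs B) (Rs B).
  split=> //.
  - by move=> a1; rewrite /Rstar mulr_gt0.
  - move=> j dp; have sp : 0 < Num.sqrt (d j)%:R :> R by rewrite sqrtr_gt0 ltr0n.
    rewrite /rstar; split; first by rewrite mulr_ge0 ?divr_ge0 // ltW.
    by move=> s0; rewrite mulr_gt0 // divr_gt0.
  - by rewrite sum_bud (eq_bigr _ (fun j _ => bstar j)); exact: sum_h_alpha.
split=> // r Rv [Rv0 rc bud_eq vle].
rewrite -(ler_pM2l (exprn_gt0 2 a0)) /objective !mulr_sumr.
pose W j := (ee B j ^+ 2 - a ^+ 2) * V j.
have L1 : \sum_j a ^+ 2 * vr (rs B) (Rs B) j = \sum_j (gam j * ee B j - W j).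
  apply: eq_bigr => j _; rewrite var_star /W /e.
  case: ifP => jB.
    have [g0 _] := IB j jB.
    rewrite /eps; field; rewrite ?gt_eqF //.
  by rewrite -/a subrr mul0r subr0; field; rewrite gt_eqF.
have L2 j : gam j * ee B j + gam j * ee B j - bud r Rv j - W j <= a ^+ 2 * vr r Rv j.
  apply: le_trans (_ : ee B j ^+ 2 * vr r Rv j - W j <= _).
    rewrite lerD2r; exact: (key_j B Rv0 (rc j)).
  rewrite /W lerBlDr -subr_ge0.
  have -> : a ^+ 2 * vr r Rv j + (ee B j ^+ 2 - a ^+ 2) * V j - ee B j ^+ 2 * vr r Rv j
     = (ee B j ^+ 2 - a ^+ 2) * (V j - vr r Rv j) by ring.
  rewrite mulr_ge0 // subr_ge0 //.
  by rewrite ler_sqr ?ege // nnegrE ltW.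
apply: le_trans; last by apply: ler_sum => j _; exact: L2.
rewrite L1 le_eqVlt; apply/orP; left; apply/eqP.
have Hg : \sum_j gam j * ee B j = C.
  transitivity (\sum_j h B a j); last exact: sum_h_alpha.
  apply: eq_bigr => j _; rewrite /h /e.
  by case: ifP => _ //; rewrite mulrC.
have Hb : \sum_j bud r Rv j = C by rewrite -sum_bud.
rewrite !sumrB big_split /= Hg Hb; ring.
Qed.
End Proof.

Lemma card_iter (R : rcfType) (J : nat) (A : finType) (port : A -> 'I_J)
  (sig : A -> R) (d : 'I_J -> nat) (sD : 'I_J -> R) (C : R) (V : 'I_J -> R) k :
  (forall i, (i < k)%N -> alg_step port sig d sD C V (alg_iter port sig d sD C V i)
                          != alg_iter port sig d sD C V i) ->
  (k <= #|alg_iter port sig d sD C V k|)%N.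
Proof.
elim: k => [//|k IH] H.
have := IH (fun i lt => H i (ltnW lt)).
move=> /leq_ltn_trans; apply; apply: proper_card.
by rewrite properEneq eq_sym H // subsetUl.
Qed.

Theorem theorem2 (R : rcfType) (J : nat) (A : finType) (port : A -> 'I_J)
  (sig : A -> R) (d : 'I_J -> nat) (sD : 'I_J -> R) (C : R) (V : 'I_J -> R) :
  (forall a, 0 < sig a) ->
  (forall j, 0 <= sD j) ->
  0 < C ->
  (forall j, 0 < V j) ->
  0 < \sum_j gamma port sig d sD j ->
  \sum_j gamma port sig d sD j * eps port sig d sD V j < C ->
  exists n : nat,
    terminates_at port sig d sD C V n /\
    global_minimiser port sig d sD C V
      (rstar port sig d sD C V (alg_iter port sig d sD C V n))
      (Rstar port sig d sD C V (alg_iter port sig d sD C V n)).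
Proof.
move=> H1 H2 H3 H4 H5 H6.
pose P k := alg_step port sig d sD C V (alg_iter port sig d sD C V k)
            == alg_iter port sig d sD C V k.
have exP : exists k, P k.
  case: (boolP [exists k : 'I_J.+1, P k]) => [/existsP [k Pk]|]; first by exists k.
  rewrite negb_exists => /forallP nP.
  have lt := @card_iter R J A port sig d sD C V J.+1 (fun i lt => nP (Ordinal lt)).
  have := leq_trans lt (max_card _).
  by rewrite card_ord ltnn.
case: (ex_minnP exP) => n Pn minn.
exists n; split.
  split; last exact/eqP.
  move=> k lt; apply/negP => Pk; have := minn k Pk; by rewrite leqNgt lt.
apply: (opt H1 H2 H4 H6 (Inv_iter H1 H2 H4 H5 H6 n)).
exact/eqP.
Qed.
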